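(* Suppose the rows of $\tilde{\mathbf Z}^\star$ can be represented in a $d_0$-dimensional Fourier basis, i.e. $\mathbf F^\star$ has at most $d_0$ nonzero columns. Then $d=\operatorname{rank}(\mathbf R^\star)\le 2d_0$, and there exists $\tilde{\mathbf W}\in\mathbb O_T$ such that $$\begin{bmatrix}\operatorname{ASE}(\mathbf R^\star,d) & \mathbf 0\end{bmatrix}=\frac1{\sqrt T}\mathbf F^\star\mathbf K^{1/2}\tilde{\mathbf W},$$ where $\mathbf 0$ is the $n\times(T-d)$ zero matrix.
   Context: Let $\mathbf Z^\star\in\mathbb R^{n\times T}$ have rows $\mathbf Z^\star_i$ with $\sigma^{\star2}_i=\frac1T\|\mathbf M\mathbf Z^\star_i\|^2>0$, where $\mathbf M=\mathbf I-\frac1T\mathbf J$ is the centering projection ($\mathbf J$ all-ones). Let $\boldsymbol\Sigma^\star=\operatorname{diag}(\sigma^{\star2}_1,\dots,\sigma^{\star2}_n)$, $\tilde{\mathbf Z}^\star=\frac1{\sqrt T}(\boldsymbol\Sigma^\star)^{-1/2}\mathbf Z^\star\mathbf M$, and $\mathbf R^\star=\tilde{\mathbf Z}^\star\tilde{\mathbf Z}^{\star\top}$ (the correlation matrix of the rows of $\mathbf Z^\star$). Let $\mathbf F^\star\in\mathbb C^{n\times T}$ have entries $F^\star_{i,k}=\sum_{t=1}^T\tilde Z^\star_{i,t}\exp\{-2\pi\mathrm i(k-1)(t-1)/T\}$. Let $\mathbf K\in\mathbb R^{T\times T}$ be the permutation matrix with $K_{s,t}=1$ if $s=t=1$ or $s+t=T+2$,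 and $0$ otherwise; with $\mathbf P_\pm$ the orthogonal projections onto its $\pm1$ eigenspaces, $\mathbf K^{1/2}=\mathbf P_++\mathrm i\,\mathbf P_-$. For a symmetric $\mathbf A\in\mathbb R^{n\times n}$, $\operatorname{ASE}(\mathbf A,d)=\mathbf V|\mathbf D|^{1/2}$, where $\mathbf D$ is the diagonal matrix of the $d$ largest-magnitude eigenvalues of $\mathbf A$ and $\mathbf V\in\mathbb R^{n\times d}$ holds corresponding orthonormal eigenvectors. $\mathbb O_T$ denotes the $T\times T$ orthogonal matrices. *)

(* Defs.v *)
From HB Require Import structures.
From mathcomp Require Import all_boot all_order all_algebra.
From mathcomp Require Import complex.
From mathcomp Require Import reals trigo.
Set Implicit Arguments. Unset Strict Implicit. Unset Printing Implicit Defensive.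
Import Order.TTheory GRing.Theory Num.Theory.
Local Open Scope ring_scope.

Section Defs.
Variable R : realType.
Local Notation C := (complex R).

Definition RtoC (x : R) : C := Complex x 0.
Definition iC : C := Complex 0 1.

Definition centerM (T : nat) : 'M[R]_T := 1%:M - (T%:R)^-1 *: const_mx 1.

Definition sigma2 (n T : nat) (Z : 'M[R]_(n, T)) (i : 'I_n) : R :=
  (T%:R)^-1 * \sum_(t < T) ((Z *m centerM T) i t) ^+ 2.

Definition Ztilde (n T : nat) (Z : 'M[R]_(n, T)) : 'M[R]_(n, T) :=
  \matrix_(i, t) ((Num.sqrt (T%:R))^-1 * (Num.sqrt (sigma2 Z i))^-1
                   * (Z *m centerM T) i t).

Definition Rstar (n T : nat) (Z : 'M[R]_(n, T)) : 'M[R]_n :=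
  Ztilde Z *m (Ztilde Z)^T.

(* exp{-2 pi i k t / T} with 0-based indices k = k'-1, t = t'-1 *)
Definition dft_root (T k t : nat) : C :=
  let th := 2 * pi * (k%:R * t%:R) / T%:R in Complex (cos th) (- sin th).

Definition Fstar (n T : nat) (Z : 'M[R]_(n, T)) : 'M[C]_(n, T) :=
  \matrix_(i, k) \sum_(t < T) RtoC (Ztilde Z i t) * dft_root T k t.

(* K_{s,t} = 1 iff s = t = 1 or s + t = T + 2 (1-based); 0-based:
   s = t = 0 or s + t = T *)
Definition Kperm (T : nat) : 'M[R]_T :=
  \matrix_(s, t) (if ((s == 0%N :> nat) && (t == 0%N :> nat)) || (s + t == T)%N
                  then 1 else 0).

(* orthogonal projections onto the +1 / -1 eigenspaces of the symmetric
   involution K *)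
Definition Pplus (T : nat) : 'M[R]_T := 2^-1 *: (1%:M + Kperm T).
Definition Pminus (T : nat) : 'M[R]_T := 2^-1 *: (1%:M - Kperm T).

Definition Khalf (T : nat) : 'M[C]_T :=
  map_mx RtoC (Pplus T) + iC *: map_mx RtoC (Pminus T).

(* Encoded through a full spectral
   decomposition A = U diag(e) U^T (U orthogonal), eigenvalues sorted by
   nonincreasing magnitude, V = first d columns of U, D = first d entries of e. *)
Definition is_ASE (n : nat) (A : 'M[R]_n) (d : nat) (X : 'M[R]_(n, d)) : Prop :=
  (d <= n)%N /\
  exists (U : 'M[R]_n) (e : 'rV[R]_n),
    U^T *m U = 1%:M /\
    A = U *m diag_mx e *m U^T /\
    (forall i j : 'I_n, (i <= j)%N -> `|e 0 j| <= `|e 0 i|) /\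
    (forall (i : 'I_n) (k : 'I_d),
       X i k = match @insub nat (fun m => (m < n)%N) _ (val k) with
               | Some j => U i j * Num.sqrt `|e 0 j|
               | None => 0
               end).

Definition padcols (n d T : nat) (X : 'M[R]_(n, d)) : 'M[R]_(n, T) :=
  \matrix_(i, j) match @insub nat (fun m => (m < d)%N) _ (val j) with
                 | Some k => X i k
                 | None => 0
                 end.

End Defs.

(* Main.v *)
Require Import Defs.
From HB Require Import structures.
From mathcomp Require Import all_boot all_order all_algebra.
From mathcomp Require Import complex.
From mathcomp Require Import reals trigo.
From mathcomp Require Import ring lra zify.
Import Order.TTheory GRing.Theory Num.Theory.
Local Open Scope ring_scope.
Set Implicit Arguments. Unset Strict Implicit. Unset Printing Implicit Defensive.

Section Compl.
Variable R : rcfType.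

Lemma ext_row T (W0 : 'M[R]_T) m : (m < T)%N ->
  exists w : 'rV[R]_T, w *m w^T = 1%:M /\
    forall i : 'I_T, (i < m)%N -> \sum_j w 0 j * W0 i j = 0.
Proof.
move=> mT.
pose V := (pid_mx m : 'M[R]_T) *m W0.
have rV : (\rank V <= m)%N.
  apply: leq_trans (mxrankM_maxl _ _) _.
  by rewrite rank_pid_mx // ltnW.
have : kermx V^T != 0.
  rewrite -mxrank_eq0 mxrank_ker mxrank_tr -lt0n subn_gt0.
  exact: leq_ltn_trans rV mT.
have [allz|] := boolP [forall i, row i (kermx V^T) == 0].
  by case/negP; apply/eqP/row_matrixP=> i; rewrite row0; apply/eqP; move/forallP: allz.
rewrite negb_forall => /existsP [i0 ri0] _.
set r := row i0 (kermx V^T) in ri0.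
have rV0 : r *m V^T = 0 by rewrite /r -row_mul mulmx_ker row0.
clearbody r.
set s := \sum_j r 0 j ^+ 2.
have s_gt0 : 0 < s.
  rewrite lt_def sumr_ge0 ?andbT; last by move=> j _; rewrite sqr_ge0.
  apply/negP=> /eqP/psumr_eq0P H; case/negP: ri0; apply/eqP/rowP=> j.
  have /eqP := H (fun k _ => sqr_ge0 _) j isT.
  by rewrite sqrf_eq0 => /eqP ->; rewrite mxE.
exists ((Num.sqrt s)^-1 *: r); split.
  apply/rowP=> j; rewrite [j]ord1 !mxE eqxx /=.
  under eq_bigr do rewrite !mxE.
  have -> : \sum_i (Num.sqrt s)^-1 * r 0 i * ((Num.sqrt s)^-1 * r 0 i) =
           (Num.sqrt s)^-1 ^+ 2 * s.
    by rewrite /s mulr_sumr; apply: eq_bigr=> i _; rewrite !exprS expr0 !mulr1; ring.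
  by rewrite exprVn sqr_sqrtr ?ltW // mulVf // gt_eqF.
move=> i im.
have Vi : forall j, V i j = W0 i j.
  move=> j; rewrite !mxE (bigD1 i) //= mxE eqxx im mul1r big1 ?addr0 // => k ki.
  by rewrite mxE eq_sym (inj_eq val_inj) (negPf ki) mul0r.
have H : \sum_j r 0 j * V i j = 0.
  transitivity ((r *m V^T) 0 i); last by rewrite rV0 mxE.
  by rewrite mxE; apply: eq_bigr => j _; rewrite [V^T _ _]mxE.
under eq_bigr do rewrite mxE -mulrA.
rewrite -mulr_sumr; under eq_bigr do rewrite -Vi.
by rewrite H mulr0.
Qed.

Lemma complete T (W0 : 'M[R]_T) m : (m <= T)%N ->
  (forall i j : 'I_T, (i < m)%N -> (j < m)%N -> \sum_k W0 i k * W0 j k = (i == j)%:R) ->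
  exists W : 'M[R]_T, W *m W^T = 1%:M /\ forall i : 'I_T, (i < m)%N -> row i W = row i W0.
Proof.
move: {2}(T - m)%N (erefl (T - m)%N) => k; elim: k m W0 => [|k IH] m W0 Tm mT orth.
  exists W0; split => // ; apply/matrixP => i j; rewrite !mxE.
  under eq_bigr do rewrite mxE.
  have le : (T <= m)%N by rewrite -subn_eq0 Tm.
  by apply: orth; apply: leq_trans le.
have mlt : (m < T)%N by rewrite -subn_gt0 Tm.
have [w [ww wo]] := ext_row W0 mlt.
pose W1 := \matrix_(i, j) if (i == m :> nat) then w 0 j else W0 i j.
have e1 : (T - m.+1)%N = k by rewrite subnS Tm.
have o1 : forall i j : 'I_T, (i < m.+1)%N -> (j < m.+1)%N -> \sum_k W1 i k * W1 j k = (i == j)%:R.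
  move=> i j; rewrite !ltnS [(i <= m)%N]leq_eqVlt [(j <= m)%N]leq_eqVlt => /orP[/eqP im|im] /orP[/eqP jm|jm].
  + have -> : i == j by rewrite -(inj_eq val_inj) /= im jm.
    have := congr1 (fun M : 'M_1 => M 0 0) ww; rewrite !mxE /= => <-.
    by apply: eq_bigr => l _; rewrite !mxE im jm eqxx.
  + have -> : (i == j) = false by apply/negbTE; rewrite -(inj_eq val_inj) /= im neq_ltn jm orbT.
    rewrite (_ : false%:R = 0) //; transitivity (\sum_l w 0 l * W0 j l); last exact: wo j jm.
    apply: eq_bigr => l _; rewrite !mxE im eqxx.
    by rewrite (ltn_eqF jm).
  + have -> : (i == j) = false by apply/negbTE; rewrite -(inj_eq val_inj) /= jm neq_ltn im.
    rewrite (_ : false%:R = 0) //; transitivity (\sum_l w 0 l * W0 i l); last exact: wo i im.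
    apply: eq_bigr => l _; rewrite !mxE jm eqxx.
    by rewrite (ltn_eqF im) mulrC.
  + rewrite -orth //; apply: eq_bigr => l _; rewrite !mxE.
    by rewrite (ltn_eqF im) (ltn_eqF jm).
have [W [WW Wr]] := IH m.+1 W1 e1 mlt o1.
exists W; split => // i im.
rewrite Wr; last by rewrite ltnS ltnW.
by apply/rowP => j; rewrite !mxE (ltn_eqF im).
Qed.
End Compl.

Section Trig.
Variable R : realType.
Local Notation C := (complex R).

Lemma sumC (I : finType) (f g : I -> R) :
  \sum_i Complex (f i) (g i) = Complex (\sum_i f i) (\sum_i g i) :> C.
Proof.
apply: (big_rec3 (fun (a : C) b c => a = Complex b c)) => // i x y z _ ->.
by [].
Qed.

Lemma cosDn (x : R) (k : nat) : cos (x + k%:R * (pi *+ 2)) = cos x.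
Proof.
elim: k => [|k IH]; first by rewrite mul0r addr0.
by rewrite -[k.+1]addn1 natrD mulrDl mul1r addrA cosD2pi.
Qed.

Lemma sinDn (x : R) (k : nat) : sin (x + k%:R * (pi *+ 2)) = sin x.
Proof.
elim: k => [|k IH]; first by rewrite mul0r addr0.
by rewrite -[k.+1]addn1 natrD mulrDl mul1r addrA sinD2pi.
Qed.

Lemma cisX (p : R) (t : nat) :
  (Complex (cos p) (sin p) : C) ^+ t = Complex (cos (t%:R * p)) (sin (t%:R * p)).
Proof.
elim: t => [|t IH]; first by rewrite expr0 mul0r cos0 sin0.
rewrite exprS IH -[t.+1]addn1 natrD mulrDl mul1r addrC cosD sinD.
by apply/eqP; rewrite eq_complex /=; apply/andP; split; apply/eqP; ring.
Qed.


Lemma cis_neq1 (x : R) : 0 < x -> x < pi *+ 2 -> (Complex (cos x) (sin x) : C) != 1.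
Proof.
move=> x0 x2; rewrite eq_complex /= negb_and; case: (ltgtP x pi) => h.
- by rewrite orbC gt_eqF // sin_gt0_pi // x0 h.
- have : 0 < sin (x - pi) by apply: sin_gt0_pi; rewrite subr_gt0 h /= ltrBlDr -mulr2n.
  by rewrite orbC -{2}(subrK pi x) sinDpi oppr_eq0 => /gt_eqF ->.
- by rewrite h cospi -subr_eq0 -opprD oppr_eq0 (_ : 1 + 1 = 2%:R) // pnatr_eq0.
Qed.

Definition ang (T k t : nat) : R := 2 * pi * (k%:R * t%:R) / T%:R.

Lemma natC (k : nat) : (k%:R : C) = Complex k%:R 0.
Proof. by rewrite -(rmorph_nat (real_complex R)). Qed.

Lemma sum_cis (T m : nat) : (0 < T)%N ->
  \sum_(t < T) (Complex (cos (ang T m t)) (sin (ang T m t)) : C) = if (T %| m)%N then T%:R else 0.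
Proof.
move=> T0; have Tn0 : (T%:R : R) != 0 by rewrite pnatr_eq0 -lt0n.
pose p : R := 2 * pi * m%:R / T%:R.
have angE : forall t, ang T m t = t%:R * p by move=> t; rewrite /ang /p; ring.
under eq_bigr do rewrite angE -cisX.
case: ifP => [/dvdnP [q mq]|ndvd].
  have -> : p = 0 + q%:R * (pi *+ 2) by rewrite /p mq natrM; field.
  rewrite cosDn sinDn cos0 sin0.
  by under eq_bigr do rewrite (_ : Complex 1 0 = 1) // expr1n; rewrite sumr_const card_ord.
have rT : (0 < m %% T < T)%N.
  rewrite ltn_pmod // andbT lt0n; apply/negP => /eqP h; move: ndvd; by rewrite /dvdn h.
pose psi : R := 2 * pi * (m %% T)%:R / T%:R.
have pE : p = psi + (m %/ T)%:R * (pi *+ 2).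
  by rewrite /p /psi {1}(divn_eq m T) natrD natrM; field.
have zn1 : (Complex (cos p) (sin p) : C) != 1.
  rewrite pE cosDn sinDn; apply: cis_neq1.
    by rewrite /psi !mulr_gt0 ?invr_gt0 ?ltr0n ?pi_gt0 //; case/andP: rT.
  rewrite /psi ltr_pdivrMr ?ltr0n // -(mulr_natl pi 2) ltr_pM2l ?mulr_gt0 ?pi_gt0 ?ltr0n // ltr_nat.
  by case/andP: rT.
have zT : (Complex (cos p) (sin p) : C) ^+ T = 1.
  rewrite cisX (_ : T%:R * p = 0 + m%:R * (pi *+ 2)); last by rewrite /p; field.
  by rewrite cosDn sinDn cos0 sin0.
have := subrX1 (Complex (cos p) (sin p) : C) T; rewrite zT subrr => /esym/eqP.
by rewrite mulf_eq0 subr_eq0 (negPf zn1) /= => /eqP.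
Qed.

Lemma sum_cos (T m : nat) : (0 < T)%N ->
  \sum_(t < T) cos (ang T m t) = if (T %| m)%N then T%:R else 0.
Proof.
move=> T0; have := sum_cis m T0; rewrite sumC.
by case: ifP => _; rewrite ?natC => -[].
Qed.

Lemma sum_sin (T m : nat) : (0 < T)%N ->
  \sum_(t < T) sin (ang T m t) = 0.
Proof.
move=> T0; have := sum_cis m T0; rewrite sumC.
by case: ifP => _; rewrite ?natC => -[].
Qed.


Definition Hm (T : nat) : 'M[R]_T := \matrix_(t, k) (cos (ang T k t) + sin (ang T k t)).

Lemma angC T a b : ang T a b = ang T b a.
Proof. by rewrite /ang [a%:R * _]mulrC. Qed.

Lemma HHt T : Hm T *m (Hm T)^T = T%:R%:M.
Proof.
case: T => [|T]; first by apply/matrixP => [[]].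
set T' := T.+1; have T0 : (0 < T')%N by [].
have Tn0 : (T'%:R : R) != 0 by rewrite pnatr_eq0.
apply/matrixP => a b; rewrite !mxE.
have E : forall t : 'I_T', Hm T' a t * (Hm T')^T t b =
    cos (ang T' (a + T' - b) t) + sin (ang T' (a + b) t).
  move=> t; rewrite !mxE [ang T' t a]angC [ang T' t b]angC.
  have -> : ang T' (a + T' - b) t = (ang T' a t - ang T' b t) + t%:R * (pi *+ 2).
    rewrite /ang natrB; last by rewrite (leq_trans (ltnW (ltn_ord b))) // leq_addl.
    by rewrite natrD; field.
  have -> : ang T' (a + b) t = ang T' a t + ang T' b t by rewrite /ang natrD; field.
  rewrite cosDn cosB sinD; ring.
under eq_bigr do rewrite E.
rewrite big_split /= sum_cos // sum_sin // addr0.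
case: (altP (a =P b)) => [<-|ab].
  by rewrite addKn dvdnn mulr1n.
rewrite mulr0n ifF //; apply/negP => /dvdnP [q hq].
have ha := ltn_ord a; have hb := ltn_ord b.
have ab' : (a : nat) != b by rewrite (inj_eq val_inj).
case: q hq => [|[|q]] hq; try lia.
Qed.

Lemma Kcond T (s k : 'I_T) : ((s == 0 :> nat) && (k == 0 :> nat)) || (s + k == T)%N = (val s == (T - k) %% T)%N.
Proof.
have hs := ltn_ord s; have hk := ltn_ord k.
case: (posnP k) => [k0|kp].
  rewrite k0 subn0 modnn /= andbT addn0.
  by rewrite (_ : (s == T :> nat) = false) ?orbF //; apply/negbTE; rewrite neq_ltn hs.
rewrite modn_small; last by rewrite ltn_subrL kp (leq_ltn_trans (leq0n _) hs).
rewrite andbF /=.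
by apply/eqP/eqP; lia.
Qed.

Lemma sumK T (f : 'I_T -> R) (k s0 : 'I_T) : val s0 = ((T - k) %% T)%N ->
  \sum_s f s * Kperm R T s k = f s0.
Proof.
move=> hs0; rewrite (bigD1 s0) //= [Kperm _ _ _ _]mxE Kcond hs0 eqxx mulr1 big1 ?addr0 //.
by move=> s ss0; rewrite mxE Kcond -hs0 (inj_eq val_inj) (negPf ss0) mulr0.
Qed.

Lemma sumD T (f : 'I_T -> R) (k : 'I_T) : \sum_s f s * (1%:M : 'M[R]_T) s k = f k.
Proof.
rewrite (bigD1 k) //= mxE eqxx mulr1 big1 ?addr0 //.
by move=> s sk; rewrite mxE (negPf sk) mulr0.
Qed.

Lemma cos_sig T (k s0 : 'I_T) (t : nat) : val s0 = ((T - k) %% T)%N ->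
  cos (ang T s0 t) = cos (ang T k t) /\ sin (ang T s0 t) = - sin (ang T k t).
Proof.
have hk := ltn_ord k.
case: (posnP k) => [k0|kp] hs0.
  rewrite /ang hs0 k0 subn0 modnn !mul0r mulr0 mul0r.
  by rewrite sin0 oppr0.
have Tn0 : (T%:R : R) != 0 by rewrite pnatr_eq0 -lt0n (leq_ltn_trans (leq0n _) hk).
have -> : ang T s0 t = - ang T k t + t%:R * (pi *+ 2).
  rewrite /ang hs0 modn_small; last by rewrite ltn_subrL kp (leq_ltn_trans (leq0n _) hk).
  by rewrite natrB ?(ltnW hk) //; field.
by rewrite cosDn sinDn cosN sinN.
Qed.

Lemma OmK T : (\matrix_(t, k) dft_root R T k t : 'M[C]_T) *m Khalf R T = map_mx (@RtoC R) (Hm T).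
Proof.
apply/matrixP => t k; rewrite !mxE.
have s0lt : ((T - k) %% T < T)%N by rewrite ltn_pmod // (leq_ltn_trans (leq0n _) (ltn_ord k)).
pose s0 := Ordinal s0lt.
have [cs ss] := cos_sig t (erefl (val s0) : val s0 = ((T - k) %% T)%N).
transitivity (\sum_(s < T) (Complex
   ((2^-1 * (cos (ang T s t) + sin (ang T s t))) * (1%:M : 'M[R]_T) s k +
    (2^-1 * (cos (ang T s t) - sin (ang T s t))) * Kperm R T s k)
   ((2^-1 * (cos (ang T s t) - sin (ang T s t))) * (1%:M : 'M[R]_T) s k +
    (2^-1 * (- cos (ang T s t) - sin (ang T s t))) * Kperm R T s k) : C)).
  apply: eq_bigr => s _.
  rewrite /Khalf /Pplus /Pminus /dft_root !mxE /RtoC /iC.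
  apply/eqP; rewrite eq_complex /=; apply/andP; split; apply/eqP; rewrite /ang; ring.
rewrite sumC !big_split /= !sumD !(sumK _ (erefl (val s0) : val s0 = ((T - k) %% T)%N)) /=.
by rewrite cs ss /RtoC; apply/eqP; rewrite eq_complex /=; apply/andP; split; apply/eqP; field.
Qed.

End Trig.

Section Key.
Variable R : realType.

Lemma diag_ind n r : (r <= n)%N ->
  diag_mx (\row_(j < n) ((j < r)%N%:R : R)) = pid_mx r.
Proof.
move=> rn; apply/matrixP=> i j; rewrite !mxE.
case: (altP (i =P j)) => [<-|ij]; first by rewrite !eqxx /= mulr1n.
rewrite mulr0n; suff -> : (i == j :> nat) = false by [].
by apply/negbTE; rewrite (inj_eq val_inj).
Qed.

Lemma insub_ord n (k : nat) (kn : (k < n)%N) :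
  @insub nat (fun m => (m < n)%N) 'I_n k = Some (Ordinal kn).
Proof. by rewrite insubT. Qed.

Lemma insub_ordF n (k : nat) : (n <= k)%N ->
  @insub nat (fun m => (m < n)%N) 'I_n k = None.
Proof. by move=> nk; rewrite insubF // ltnNge nk. Qed.

Lemma key n T (A : 'M[R]_n) (B : 'M[R]_(n,T)) (X : 'M[R]_(n, \rank A)) :
  A = B *m B^T -> is_ASE A X ->
  exists W : 'M[R]_T, W^T *m W = 1%:M /\ padcols T X = B *m W.
Proof.
move=> AB [dn [U [e [UU [AU [srt Xe]]]]]].
set d := \rank A in X dn Xe *.
have UUt : U *m U^T = 1%:M by apply: mulmx1C.
pose G := U^T *m B.
have GG : G *m G^T = diag_mx e.
  rewrite /G trmx_mul trmxK mulmxA -(mulmxA _ B) -AB AU.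
  by rewrite !mulmxA UU mul1mx -mulmxA UU mulmx1.
have GGe : forall j, \sum_t G j t ^+ 2 = e 0 j.
  move=> j; have := congr1 (fun M : 'M_n => M j j) GG; rewrite !mxE eqxx mulr1n => <-.
  by apply: eq_bigr => t _; rewrite [G^T _ _]mxE expr2.
have e_ge0 : forall j, 0 <= e 0 j.
  by move=> j; rewrite -GGe; apply: sumr_ge0 => t _; rewrite sqr_ge0.
have rD : \rank (diag_mx e) = d.
  apply/eqP; rewrite eqn_leq; apply/andP; split.
    rewrite -GG /G trmx_mul trmxK mulmxA -(mulmxA _ B) -AB.
    exact: leq_trans (mxrankM_maxl _ _) (mxrankM_maxr _ _).
  rewrite /d AU; exact: leq_trans (mxrankM_maxl _ _) (mxrankM_maxr _ _).
have e_pos : forall j : 'I_n, (j < d)%N -> 0 < e 0 j.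
  move=> j jd; rewrite lt_def e_ge0 andbT; apply/negP => /eqP ej0.
  have ez : forall i : 'I_n, (j <= i)%N -> e 0 i = 0.
    by move=> i ji; have := srt j i ji; rewrite ej0 normr0 normr_le0 => /eqP.
  have jn : (j <= n)%N by apply: ltnW.
  have Dj : diag_mx e = diag_mx e *m diag_mx (\row_(k<n) ((k < j)%N%:R : R)).
    rewrite mulmx_diag; congr diag_mx; apply/rowP => k; rewrite !mxE.
    by case: (ltnP k j) => kj; [rewrite mulr1 | rewrite ez // mul0r].
  have := mxrankM_maxr (diag_mx e) (diag_mx (\row_(k<n) ((k < j)%N%:R : R))).
  by rewrite -Dj rD diag_ind // rank_pid_mx // leqNgt jd.
have e_zero : forall j : 'I_n, (d <= j)%N -> e 0 j = 0.
  move=> j dj; apply/eqP/negPn/negP => ej.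
  have epos : forall i : 'I_n, (i <= j)%N -> e 0 i != 0.
    move=> i ij; apply/negP => /eqP ei; case/negP: ej.
    by have := srt i j ij; rewrite ei normr0 normr_le0.
  pose f := \row_(k<n) (if (k <= j)%N then (e 0 k)^-1 else 0).
  have jn : (j < n)%N := ltn_ord j.
  have Df : diag_mx e *m diag_mx f = pid_mx j.+1.
    rewrite mulmx_diag -diag_ind //; congr diag_mx; apply/rowP => k; rewrite !mxE ltnS.
    by case: (leqP k j) => kj; [rewrite mulfV ?epos | rewrite mulr0].
  have := mxrankM_maxl (diag_mx e) (diag_mx f).
  by rewrite Df rD rank_pid_mx // leqNgt ltnS dj.
have Gz : forall j : 'I_n, (d <= j)%N -> forall t, G j t = 0.
  move=> j dj t; have := GGe j; rewrite e_zero // => /eqP; rewrite psumr_eq0 => [/allP H|].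
    by apply/eqP; rewrite -sqrf_eq0; apply: (implyP (H t _)); rewrite ?mem_index_enum.
  by move=> i _; rewrite sqr_ge0.
pose wd := widen_ord dn.
pose V0 : 'M[R]_(d,T) := \matrix_(k, t) ((Num.sqrt (e 0 (wd k)))^-1 * G (wd k) t).
have V0orth : forall k l : 'I_d, \sum_t V0 k t * V0 l t = (k == l)%:R.
  move=> k l.
  have : \sum_t G (wd k) t * G (wd l) t = e 0 (wd k) *+ (wd k == wd l).
    have := congr1 (fun M : 'M_n => M (wd k) (wd l)) GG; rewrite !mxE => <-.
    by apply: eq_bigr => t _; rewrite [G^T _ _]mxE.
  have -> : (wd k == wd l) = (k == l) by rewrite -!(inj_eq val_inj).
  move=> H; transitivity ((Num.sqrt (e 0 (wd k)))^-1 * (Num.sqrt (e 0 (wd l)))^-1 *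
      \sum_t G (wd k) t * G (wd l) t).
    by rewrite mulr_sumr; apply: eq_bigr => t _; rewrite !mxE; ring.
  rewrite H; case: eqP => [<-|_]; last by rewrite mulr0n mulr0.
  have ep := e_pos (wd k) (ltn_ord k).
  rewrite mulr1n -expr2 exprVn sqr_sqrtr ?ltW // mulVf //.
  by rewrite gt_eqF.
have BUG : B = U *m G by rewrite /G mulmxA UUt mul1mx.
have BXV : B = X *m V0.
  rewrite BUG; apply/matrixP => i t; rewrite !mxE.
  rewrite (bigID (fun j : 'I_n => (j < d)%N)) /= [X in _ + X]big1 ?addr0; last first.
    by move=> j; rewrite -leqNgt => dj; rewrite Gz ?mulr0.
  rewrite (big_ord_narrow dn); apply: eq_bigr => k _.
  rewrite Xe (insub_ord (leq_trans (ltn_ord k) dn)) !mxE.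
  have -> : Ordinal (leq_trans (ltn_ord k) dn) = wd k by apply: val_inj.
  have ep := e_pos (wd k) (ltn_ord k).
  rewrite ger0_norm ?ltW // mulrA -(mulrA (U i (wd k))) mulfV ?mulr1 //.
  by rewrite gt_eqF // sqrtr_gt0.
have dT : (d <= T)%N.
  by rewrite /d AB; exact: leq_trans (mxrankM_maxr _ _) (rank_leq_row _).
pose W0 : 'M[R]_T := \matrix_(i, t) match @insub nat (fun m => (m < d)%N) 'I_d (val i) with
   Some k => V0 k t | None => 0 end.
have W0orth : forall i j : 'I_T, (i < d)%N -> (j < d)%N ->
    \sum_k W0 i k * W0 j k = (i == j)%:R.
  move=> i j id jd.
  transitivity (\sum_k V0 (Ordinal id) k * V0 (Ordinal jd) k).
    by apply: eq_bigr => k _; rewrite [W0 i k]mxE [W0 j k]mxE !insub_ord.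
  by rewrite V0orth; congr ((_ : bool)%:R); rewrite -!(inj_eq val_inj).
have [W [WW Wr]] := complete dT W0orth.
exists W^T; split; first by rewrite trmxK.
have VW : V0 *m W^T = \matrix_(k, j) ((k == j :> nat)%:R).
  apply/matrixP => k j; rewrite [RHS]mxE.
  pose wT := widen_ord dT.
  transitivity ((W *m W^T) (wT k) j); last by rewrite WW !mxE.
  rewrite mxE [RHS]mxE; apply: eq_bigr => t _; rewrite ![W^T _ _]mxE.
  have H := congr1 (fun r : 'rV_T => r 0 t) (Wr (wT k) (ltn_ord k)).
  have E : Ordinal (ltn_ord k) = k by apply: val_inj.
  rewrite /= !mxE (insub_ord (ltn_ord k)) E in H.
  by rewrite H mxE.
rewrite BXV -mulmxA VW; apply/matrixP => i j; rewrite !mxE.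
case: (ltnP j d) => jd.
  rewrite insub_ord (bigD1 (Ordinal jd)) //= mxE eqxx mulr1 big1 ?addr0 //.
  move=> k kj; rewrite mxE.
  by rewrite (_ : (k == j :> nat) = false) ?mulr0 //; apply/negbTE; rewrite -(inj_eq val_inj) in kj.
rewrite insub_ordF // big1 // => k _; rewrite mxE.
by rewrite (_ : (k == j :> nat) = false) ?mulr0 //; apply/negbTE; rewrite neq_ltn (leq_trans (ltn_ord k) jd).
Qed.
End Key.

Lemma rank_cols (R : realType) n T (B : 'M[R]_(n,T)) (S : {set 'I_T}) :
  (forall k, k \notin S -> forall i, B i k = 0) -> (\rank B <= #|S|)%N.
Proof.
move=> H.
pose Bs : 'M[R]_(n, #|S|) := \matrix_(i, j) B i (enum_val j).
pose E : 'M[R]_(#|S|, T) := \matrix_(j, k) ((enum_val j == k)%:R).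
have -> : B = Bs *m E.
  apply/matrixP => i k; rewrite !mxE.
  under eq_bigr do rewrite !mxE.
  rewrite -(big_enum_val (fun x => B i x * (x == k)%:R)) /=.
  case: (boolP (k \in S)) => kS.
    rewrite (bigD1 k) //= eqxx mulr1 big1 ?addr0 // => x /andP[_ xk].
    by rewrite (negPf xk) mulr0.
  rewrite big1 ?H // => x xS; rewrite (_ : (x == k) = false) ?mulr0 //.
  by apply/negbTE; apply: contraNneq kS => <-.
exact: leq_trans (mxrankM_maxr _ _) (rank_leq_row _).
Qed.

Unset Implicit Arguments.

Theorem mainTheorem3 (R : realType) (n T d0 : nat) (Z : 'M[R]_(n, T)) :
  (forall i : 'I_n, 0 < sigma2 Z i) ->
  (#|[set k : 'I_T | col k (Fstar Z) != 0%R]| <= d0)%N ->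
  (\rank (Rstar Z) <= 2 * d0)%N /\
  forall X : 'M[R]_(n, \rank (Rstar Z)),
    is_ASE (Rstar Z) X ->
    exists W : 'M[R]_T,
      W^T *m W = 1%:M /\
      map_mx (@RtoC R) (padcols T X)
        = ((RtoC (Num.sqrt (T%:R)))^-1) *: (Fstar Z *m Khalf R T *m map_mx (@RtoC R) W).
Proof.
move=> _ hd0.
pose Zt := Ztilde Z.
pose Q : 'M[R]_T := (Num.sqrt T%:R)^-1 *: Hm R T.
have QQ : Q *m Q^T = 1%:M.
  case: (posnP T) => [T0|Tp].
    by move: Q; rewrite T0 => Q'; apply/matrixP => [[]].
  rewrite /Q [(_ *: _)^T]linearZ /= -scalemxAl -scalemxAr scalerA HHt scale_scalar_mx.
  congr (_%:M); rewrite -expr2 exprVn sqr_sqrtr ?ler0n // mulVf //.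
  by rewrite pnatr_eq0 -lt0n.
have RB : Rstar Z = (Zt *m Q) *m (Zt *m Q)^T.
  by rewrite /Rstar trmx_mul mulmxA -(mulmxA Zt) QQ mulmx1.
have RC : @RtoC R = real_complex R by [].
have FK : (RtoC (Num.sqrt T%:R))^-1 *: (Fstar Z *m Khalf R T) = map_mx (@RtoC R) (Zt *m Q).
  have -> : Fstar Z = map_mx (@RtoC R) Zt *m (\matrix_(t,k) dft_root R T k t).
    by apply/matrixP => i k; rewrite !mxE; apply: eq_bigr => t _; rewrite !mxE.
  rewrite -mulmxA OmK RC -map_mxM /Q -scalemxAr map_mxZ fmorphV.
  by [].
split.
  rewrite RB; apply: leq_trans (mxrankM_maxl _ _) _.
  apply: leq_trans (rank_cols (S := [set k | col k (Fstar Z) != 0]) _) _; last first.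
    by apply: leq_trans hd0 _; rewrite leq_pmull.
  move=> k; rewrite inE negbK => /eqP colk i.
  have Fik : Fstar Z i k = Complex (\sum_t Zt i t * cos (ang R T k t))
                                  (- \sum_t Zt i t * sin (ang R T k t)).
    rewrite mxE -sumrN -sumC; apply: eq_bigr => t _.
    rewrite /RtoC /dft_root /ang /=; apply/eqP; rewrite eq_complex /=.
    by apply/andP; split; apply/eqP; ring.
  have : Fstar Z i k = 0.
    by have := congr1 (fun M : 'M_(n,1) => M i 0) colk; rewrite !mxE.
  rewrite Fik => -[hc /eqP]; rewrite oppr_eq0 => /eqP hs.
  rewrite mxE; under eq_bigr do rewrite [Q _ _]mxE [Hm _ _ _ _]mxE.
  transitivity ((Num.sqrt T%:R)^-1 * (\sum_t Zt i t * cos (ang R T k t) +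
                                      \sum_t Zt i t * sin (ang R T k t))).
    by rewrite -big_split mulr_sumr; apply: eq_bigr => t _ /=; ring.
  by rewrite hc hs addr0 mulr0.
move=> X ASE.
have [W [WW BW]] := key RB ASE.
exists W; split => //.
by rewrite BW scalemxAl FK RC -map_mxM.
Qed.
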